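(* Let $H$ be a real Hilbert space with inner product $(\cdot,\cdot)_H$ and norm $\|\cdot\|_H$, and let $f:H\to\mathbb{R}$ be Fréchet differentiable with gradient $\nabla f$ Lipschitz continuous with constant $L$. Then for any $\Phi^{n-1},\Phi^n,\Phi^{n+1}\in H$, $$d_{2t}f(\Phi^{n+1})\le\big(d_{2t}\Phi^{n+1},\,2\nabla f(\Phi^n)-\nabla f(\Phi^{n-1})\big)_H+3L\|d_t\Phi^{n+1}\|_H^2+3L\|d_t\Phi^n\|_H^2,$$ $$d_tf(\Phi^{n+1})\le\big(d_t\Phi^{n+1},\,\tfrac32\nabla f(\Phi^n)-\tfrac12\nabla f(\Phi^{n-1})\big)_H+\tfrac{3L}{4}\|d_t\Phi^{n+1}\|_H^2+\tfrac{L}{4}\|d_t\Phi^n\|_H^2.$$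
   Context: Difference operators: $d_t(\bullet)^{n+1}=(\bullet)^{n+1}-(\bullet)^n$ (so $d_t\Phi^n=\Phi^n-\Phi^{n-1}$), $d_{2t}(\bullet)^{n+1}=3(\bullet)^{n+1}-4(\bullet)^n+(\bullet)^{n-1}$; applied to $f$ these mean e.g. $d_{2t}f(\Phi^{n+1})=3f(\Phi^{n+1})-4f(\Phi^n)+f(\Phi^{n-1})$. *)

(* Defs.v *)
From HB Require Import structures.
From mathcomp Require Import all_boot all_order all_algebra.
From mathcomp Require Import all_classical all_reals all_analysis.
Set Implicit Arguments. Unset Strict Implicit. Unset Printing Implicit Defensive.
Import Order.TTheory GRing.Theory Num.Theory.
Import numFieldNormedType.Exports.
Local Open Scope ring_scope.

Definition is_inner_product {R : realType} {H : normedModType R}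
  (ip : H -> H -> R) : Prop :=
  [/\ forall x y, ip x y = ip y x,
      forall a x y z, ip (a *: x + y) z = a * ip x z + ip y z,
      forall x, 0 <= ip x x
    & forall x, ip x x = `|x| ^+ 2].

Definition is_gradient {R : realType} {H : normedModType R}
  (ip : H -> H -> R) (f : H -> R) (g : H -> H) : Prop :=
  forall x, differentiable f x /\ forall v, 'd f x v = ip v (g x).

Definition lipschitz_const {R : realType} {H : normedModType R}
  (g : H -> H) (L : R) : Prop :=
  forall x y, `|g x - g y| <= L * `|x - y|.

(* Main.v *)
Require Import Defs.
From HB Require Import structures.
From mathcomp Require Import all_boot all_order all_algebra.
From mathcomp Require Import all_classical all_reals all_analysis.
From mathcomp Require Import ring lra.
Import Order.TTheory GRing.Theory Num.Theory.
Import numFieldNormedType.Exports.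
Local Open Scope classical_set_scope.
Local Open Scope ring_scope.

Section IP.
Variables (R : realType) (H : normedModType R) (ip : H -> H -> R).
Hypothesis hip : is_inner_product ip.

Lemma ip0l z : ip 0 z = 0.
Proof.
case: hip => _ hD _ _.
have := hD 1 0 0 z; rewrite scaler0 addr0 mul1r => e.
lra.
Qed.

Lemma ipDl x y z : ip (x + y) z = ip x z + ip y z.
Proof. by case: hip => _ hD _ _; rewrite -[x]scale1r hD mul1r scale1r. Qed.

Lemma ipZl a x z : ip (a *: x) z = a * ip x z.
Proof. by case: hip => _ hD _ _; rewrite -[a *: x]addr0 hD ip0l addr0. Qed.

Lemma ipNl x z : ip (- x) z = - ip x z.
Proof. by rewrite -scaleN1r ipZl mulN1r. Qed.

Lemma ipBl x y z : ip (x - y) z = ip x z - ip y z.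
Proof. by rewrite ipDl ipNl. Qed.

Lemma ipC x y : ip x y = ip y x.
Proof. by case: hip. Qed.

Lemma ipDr x y z : ip z (x + y) = ip z x + ip z y.
Proof. by rewrite ipC ipDl !(ipC z). Qed.

Lemma ipZr a x z : ip z (a *: x) = a * ip z x.
Proof. by rewrite ipC ipZl ipC. Qed.

Lemma ipBr x y z : ip z (x - y) = ip z x - ip z y.
Proof. by rewrite ipC ipBl !(ipC z). Qed.

Lemma ipNr x z : ip z (- x) = - ip z x.
Proof. by rewrite ipC ipNl ipC. Qed.

Lemma ipnorm x : ip x x = `|x| ^+ 2.
Proof. by case: hip. Qed.

Lemma ipCS u w : ip u w <= `|u| * `|w|.
Proof.
have e : `|u + w| ^+ 2 = `|u| ^+ 2 + 2 * ip u w + `|w| ^+ 2.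
  by rewrite -!ipnorm ipDl !ipDr (ipC w u); ring.
have t := ler_normD u w.
have n1 := normr_ge0 (u + w).
have n2 := normr_ge0 u.
have n3 := normr_ge0 w.
nra.
Qed.

End IP.
Arguments ip0l {R H ip}. Arguments ipDl {R H ip}. Arguments ipBl {R H ip}. Arguments ipZl {R H ip}.
Arguments ipDr {R H ip}. Arguments ipBr {R H ip}. Arguments ipZr {R H ip}. Arguments ipCS {R H ip}. Arguments ipNl {R H ip}. Arguments ipNr {R H ip}.

Lemma phi_derive (R : realType) (H : normedModType R)
  (ip : H -> H -> R) (f : H -> R) (gradf : H -> H) (x v : H) (t : R) :
  is_gradient ip f gradf ->
  is_derive t 1 (fun s : R => f (s *: v + x)) (ip v (gradf (t *: v + x))).
Proof.
move=> hg.
have key : (fun h : R => h^-1 *: (((fun s : R => f (s *: v + x)) \o shift t) (h *: 1)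
              - f (t *: v + x))) =
           (fun h : R => h^-1 *: ((f \o shift (t *: v + x)) (h *: v) - f (t *: v + x))).
  apply/funext => h /=; congr (_ *: (f _ - _)).
  by rewrite /shift /= -[h *: 1]/(h * 1) mulr1 scalerDl addrA.
have [df dv] := hg (t *: v + x).
have der : derivable (fun s : R => f (s *: v + x)) t 1.
  by rewrite /derivable key; exact: diff_derivable.
apply: DeriveDef => //.
by rewrite /derive key -/(derive f (t *: v + x) v) deriveE // dv.
Qed.
Lemma dq (R : realType) (A B t : R) :
  is_derive t 1 (fun s : R => s * A + s ^+ 2 * B) (A + 2 * t * B).
Proof.
have -> : (fun s : R => s * A + s ^+ 2 * B) = ((@id R) * cst A + (@id R)^+2 * cst B).
  by apply/funext => s.
apply: is_derive_eq.
rewrite /=.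
rewrite !scaler0 !add0r expr1.
rewrite -[A%:A]/(A * 1) -[(2 * t)%:A]/((2 * t) * 1) -[B *: _]/(B * _) !mulr1 [B * _]mulrC.
lra.
Qed.

Lemma descent (R : realType) (H : normedModType R)
  (ip : H -> H -> R) (f : H -> R) (g : H -> H) (L : R) :
  is_inner_product ip -> is_gradient ip f g -> lipschitz_const g L -> 0 <= L ->
  forall x y, f y - f x <= ip (y - x) (g x) + L / 2 * `|y - x| ^+ 2.
Proof.
move=> hip hg hl hL x y.
set v := y - x; set A := ip v (g x); set B := L / 2 * `|v| ^+ 2.
pose F := fun s : R => f (s *: v + x).
pose G := fun s : R => s * A + s ^+ 2 * B.
have dpsi : forall t : R, is_derive t (1 : R) (F - G) (ip v (g (t *: v + x)) - (A + 2 * t * B)).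
  by move=> t; exact: (is_deriveB (@phi_derive _ _ ip f g x v t hg) (@dq _ A B t)).
have cont : {within `[0, 1], continuous (F - G)}.
  apply: derivable_within_continuous => t _.
  by have [] := dpsi t.
have [c c01 e] := MVT_segment ler01 (fun t _ => dpsi t) cont.
have c0 : 0 <= c by move: c01; rewrite in_itv /= => /andP[].
have neg : ip v (g (c *: v + x)) - (A + 2 * c * B) <= 0.
  have h1 : ip v (g (c *: v + x)) - A = ip v (g (c *: v + x) - g x)
    by rewrite /A ipBr.
  have h2 := ipCS hip v (g (c *: v + x) - g x).
  have h3 := hl (c *: v + x) x.
  rewrite addrK normrZ ger0_norm // in h3.
  have nv := normr_ge0 v.
  have ng := normr_ge0 (g (c *: v + x) - g x).
  rewrite /B.
  nra.
rewrite /= subr0 mulr1 in e.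
have e' : f (1 *: v + x) - (1 * A + 1 ^+ 2 * B) - (f (0 *: v + x) - (0 * A + 0 ^+ 2 * B))
  = ip v (g (c *: v + x)) - (A + 2 * c * B) := e.
rewrite scale1r scale0r add0r /v subrK expr1n expr0n /= !mul0r !mul1r addr0 in e'.
lra.
Qed.

Theorem lemma3p6 (R : realType) (H : completeNormedModType R)
  (ip : H -> H -> R) (f : H -> R) (gradf : H -> H) (L : R) :
  is_inner_product ip ->
  is_gradient ip f gradf ->
  lipschitz_const gradf L ->
  forall Pm Pn Pp : H,
    (3 * f Pp - 4 * f Pn + f Pm
       <= ip (3 *: Pp - 4 *: Pn + Pm) (2 *: gradf Pn - gradf Pm)
          + 3 * L * `|Pp - Pn| ^+ 2 + 3 * L * `|Pn - Pm| ^+ 2)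
    /\
    (f Pp - f Pn
       <= ip (Pp - Pn) ((3 / 2) *: gradf Pn - (1 / 2) *: gradf Pm)
          + (3 * L / 4) * `|Pp - Pn| ^+ 2 + (L / 4) * `|Pn - Pm| ^+ 2).
Proof.
move=> hip hg hl Pm Pn Pp.
have [hL|hL] := leP 0 L; last first.
  have z : forall u : H, u = 0.
    move=> u; have := hl u 0; rewrite !subr0 => h.
    have h0 := normr_ge0 (gradf u - gradf 0).
    have hu := normr_ge0 u.
    have : `|u| <= 0 by nra.
    by rewrite normr_le0 => /eqP.
  rewrite (z (3 *: Pp - 4 *: Pn + Pm)) (z (Pp - Pn)) (z (Pn - Pm)) (z Pp) (z Pn) (z Pm).
  rewrite !(ip0l hip) normr0 expr0n /= !mulr0 !addr0.
  split; lra.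
have d1 := @descent _ _ ip f gradf L hip hg hl hL Pn Pp.
have d2 := @descent _ _ ip f gradf L hip hg hl hL Pn Pm.
rewrite (distrC Pm Pn) in d2.
set a := `|Pp - Pn| in d1 *; set b := `|Pn - Pm| in d2 *.
have ha : 0 <= a by apply: normr_ge0.
have hb : 0 <= b by apply: normr_ge0.
set G := `|gradf Pn - gradf Pm|.
have hG : G <= L * b by apply: hl.
have c1 := ipCS hip (Pn - Pp) (gradf Pn - gradf Pm).
have c2 := ipCS hip (Pn - Pm) (gradf Pn - gradf Pm).
rewrite distrC -/a -/G in c1; rewrite -/b -/G in c2.
have h4 : a * G <= a * (L * b) by apply: ler_wpM2l.
have h5 : b * G <= b * (L * b) by apply: ler_wpM2l.
have h6 : 0 <= L * (a - b) ^+ 2 by apply: mulr_ge0 => //; apply: sqr_ge0.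
move: d1 d2 c1 c2.
rewrite !(ipDl hip, ipBl hip, ipZl hip, ipDr hip, ipBr hip, ipZr hip, ipNl hip, ipNr hip).
move=> d1 d2 c1 c2.
split; nra.
Qed.
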